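(* Let $$A= \begin{pmatrix} 1& -2& 2\\ 2&-1& 2\\ 2&-2& 3 \end{pmatrix},\quad B= \begin{pmatrix} 1& 2& 2\\ 2&1& 2\\ 2&2& 3 \end{pmatrix},\quad C= \begin{pmatrix} -1& 2& 2\\ -2&1& 2\\ -2&2& 3 \end{pmatrix},$$ and let $P=(x,y,z)$ be a primitive Pythagorean triple. Then the triangle in $\mathbb{R}^3$ with vertices $AP^\top$, $BP^\top$, $CP^\top$ has inradius $$r= \frac{2xy\sqrt{17}}{3x+3y+\sqrt{9x^2-16xy+9y^2}}$$ and circumradius $$R=\frac{9\sqrt{9x^2-16xy+9y^2}}{\sqrt{17}}.$$
   Context: A primitive Pythagorean triple is a triple $(x,y,z)$ of positive integers with $x^2+y^2=z^2$, $\gcd(x,y)=1$ and $x$ odd. Triples are regarded as row vectors and $\top$ denotes transpose; $\mathbb{R}^3$ carries the Euclidean metric. *)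

(* Defs.v *)
From HB Require Import structures.
From mathcomp Require Import all_boot all_order all_algebra.
From mathcomp Require Import reals.
Set Implicit Arguments. Unset Strict Implicit. Unset Printing Implicit Defensive.
Import Order.TTheory GRing.Theory Num.Theory.
Local Open Scope ring_scope.

Definition mx3 (r : seq (seq int)) : 'M[int]_3 :=
  \matrix_(i < 3, j < 3) nth 0 (nth [::] r i) j.

Definition matA : 'M[int]_3 := mx3 [:: [:: 1; -2; 2]; [:: 2; -1; 2]; [:: 2; -2; 3]].
Definition matB : 'M[int]_3 := mx3 [:: [:: 1; 2; 2]; [:: 2; 1; 2]; [:: 2; 2; 3]].
Definition matC : 'M[int]_3 := mx3 [:: [:: -1; 2; 2]; [:: -2; 1; 2]; [:: -2; 2; 3]].

Definition triple_row (x y z : nat) : 'rV[int]_3 :=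
  \row_(j < 3) nth 0 [:: x%:Z; y%:Z; z%:Z] j.

Definition primitive_pythagorean (x y z : nat) : Prop :=
  [/\ [/\ (0 < x)%N, (0 < y)%N & (0 < z)%N],
      (x ^ 2 + y ^ 2 = z ^ 2)%N, gcdn x y = 1%N & odd x].

Definition vertex (R : realType) (M : 'M[int]_3) (x y z : nat) : 'cV[R]_3 :=
  map_mx (fun k : int => k%:~R) (M *m (triple_row x y z)^T).

Definition dotv (R : realType) (u v : 'cV[R]_3) : R := \sum_(i < 3) u i 0 * v i 0.
Definition normv (R : realType) (u : 'cV[R]_3) : R := Num.sqrt (dotv u u).

(* d is the (Euclidean) distance from p to the line through u and v:
   q is the foot of the perpendicular from p to that line. *)
Definition dist_to_line (R : realType) (p u v : 'cV[R]_3) (d : R) : Prop :=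
  exists t : R, let q := u + t *: (v - u) in
    dotv (p - q) (v - u) = 0 /\ normv (p - q) = d.

(* Circumradius: radius of the circle in the plane of the triangle through
   the three vertices (its center O lies in the affine plane of a, b, c). *)
Definition is_circumradius (R : realType) (a b c : 'cV[R]_3) (rad : R) : Prop :=
  exists s t : R, let O := a + s *: (b - a) + t *: (c - a) in
    [/\ normv (O - a) = rad, normv (O - b) = rad & normv (O - c) = rad].

(* Inradius: radius of the circle inscribed in the triangle: its center I is
   an interior point of the triangle equidistant (distance rad) from the three
   side lines. *)
Definition is_inradius (R : realType) (a b c : 'cV[R]_3) (rad : R) : Prop :=
  exists la lb lc : R,
    [/\ 0 < la, 0 < lb, 0 < lc, la + lb + lc = 1 &
      let I := la *: a + lb *: b + lc *: c in
      [/\ dist_to_line I a b rad, dist_to_line I b c rad & dist_to_line I c a rad]].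

(* Main.v *)
Require Import Defs.
From HB Require Import structures.
From mathcomp Require Import all_boot all_order all_algebra.
From mathcomp Require Import reals ring lra.
Import Order.TTheory GRing.Theory Num.Theory.
Local Open Scope ring_scope.

Lemma natzR (R : realType) (n : nat) : (n%:Z)%:~R = n%:R :> R.
Proof. by []. Qed.

Ltac vtac := rewrite /vertex !mxE !big_ord_recl big_ord0 !mxE /=;
  rewrite !(rmorphD, rmorphM, rmorphN) /= !natzR; ring.

Notation i0 := (@ord0 2).
Notation i1 := (lift (@ord0 2) (@ord0 1)).
Notation i2 := (lift (@ord0 2) (lift (@ord0 1) (@ord0 0))).

Lemma vE (R : realType) x y z : let X : R := x%:R in let Y : R := y%:R in let Z : R := z%:R in
  [/\ [/\ vertex R matA x y z i0 0 = X - 2*Y + 2*Z,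
      vertex R matA x y z i1 0 = 2*X - Y + 2*Z &
      vertex R matA x y z i2 0 = 2*X - 2*Y + 3*Z],
     [/\ vertex R matB x y z i0 0 = X + 2*Y + 2*Z,
      vertex R matB x y z i1 0 = 2*X + Y + 2*Z &
      vertex R matB x y z i2 0 = 2*X + 2*Y + 3*Z] &
     [/\ vertex R matC x y z i0 0 = - X + 2*Y + 2*Z,
      vertex R matC x y z i1 0 = - 2*X + Y + 2*Z &
      vertex R matC x y z i2 0 = - 2*X + 2*Y + 3*Z]].
Proof. by move=> X Y Z; split; split; vtac. Qed.

Lemma dotE (R : realType) (u v : 'cV[R]_3) :
  dotv u v = u i0 0 * v i0 0 + u i1 0 * v i1 0 + u i2 0 * v i2 0.
Proof. by rewrite /dotv !big_ord_recl big_ord0 addr0 addrA. Qed.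

Lemma sqrt_eq (R : realType) (e r : R) : 0 <= r -> e = r ^+ 2 -> Num.sqrt e = r.
Proof. by move=> r0 ->; rewrite sqrtr_sqr ger0_norm. Qed.

Theorem mainTheorem14 (R : realType) (x y z : nat) :
  primitive_pythagorean x y z ->
  let a : 'cV[R]_3 := vertex R matA x y z in
  let b : 'cV[R]_3 := vertex R matB x y z in
  let c : 'cV[R]_3 := vertex R matC x y z in
  let X : R := x%:R in
  let Y : R := y%:R in
  let D : R := Num.sqrt (9 * X ^+ 2 - 16 * X * Y + 9 * Y ^+ 2) in
  is_inradius a b c (2 * X * Y * Num.sqrt 17 / (3 * X + 3 * Y + D)) /\
  is_circumradius a b c (9 * D / Num.sqrt 17).
Proof.
case=> [[x0 y0 z0] _ _ _] a b c X Y D.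
have X0 : 0 < X by rewrite ltr0n.
have Y0 : 0 < Y by rewrite ltr0n.
have XN : X != 0 by rewrite gt_eqF.
have YN : Y != 0 by rewrite gt_eqF.
set Q := 9 * X ^+ 2 - 16 * X * Y + 9 * Y ^+ 2.
have Q0 : 0 < Q.
  have h1 := mulr_gt0 X0 Y0. have h2 : 0 <= (X - Y) ^+ 2 by apply: sqr_ge0.
  have -> : Q = 9 * (X - Y) ^+ 2 + 2 * (X * Y) by rewrite /Q; ring.
  lra.
have QN : Q != 0 by rewrite gt_eqF.
have D0 : 0 < D by rewrite sqrtr_gt0.
have DQ : D ^+ 2 = Q by rewrite sqr_sqrtr // ltW.
have S0 : 0 < 3 * X + 3 * Y + D by lra.
have SN : 3 * X + 3 * Y + D != 0 by rewrite gt_eqF.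
have s17 : 0 < Num.sqrt 17 :> R by rewrite sqrtr_gt0.
have s17N : Num.sqrt 17 != 0 :> R by rewrite gt_eqF.
have s17s : Num.sqrt 17 ^+ 2 = 17 :> R by rewrite sqr_sqrtr.
move: (vE R x y z) => /=; rewrite -/a -/b -/c -/X -/Y.
move=> [[a0 a1 a2] [b0 b1 b2] [c0 c1 c2]].
clearbody a b c.
split.
  have rr : (2 * X * Y * Num.sqrt 17 / (3 * X + 3 * Y + D)) ^+ 2
      = 68 * X ^+ 2 * Y ^+ 2 / (3 * X + 3 * Y + D) ^+ 2.
    rewrite expr_div_n !exprMn s17s; field; by rewrite ?SN.
  have r0 : 0 <= 2 * X * Y * Num.sqrt 17 / (3 * X + 3 * Y + D).
    apply/ltW/divr_gt0 => //; apply: mulr_gt0 => //; apply: mulr_gt0 => //; apply: mulr_gt0 => //.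
  have SQ : 68 * X ^+ 2 * Y ^+ 2 / (3 * X + 3 * Y + D) ^+ 2 =
     68 * X ^+ 2 * Y ^+ 2 * D ^+ 2 / (Q * (3 * X + 3 * Y + D) ^+ 2).
    rewrite DQ; field; by rewrite ?SN ?QN.
  exists (3 * X / (3 * X + 3 * Y + D)), (D / (3 * X + 3 * Y + D)), (3 * Y / (3 * X + 3 * Y + D)).
  split; first (by apply: divr_gt0 => //; lra); first (by apply: divr_gt0 => //; lra);
    first (by apply: divr_gt0 => //; lra); first (by field; rewrite ?SN).
  split.
  - exists (D / (3 * X + 3 * Y + D) + 3 * Y / (3 * X + 3 * Y + D) * (9 * Y - 8 * X) / (9 * Y)).
    move=> q; rewrite /q; split; last (rewrite /normv; apply: sqrt_eq => //; rewrite rr);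
    rewrite dotE !mxE a0 a1 a2 b0 b1 b2 c0 c1 c2; field; by rewrite ?SN ?XN ?YN.
  - exists (3 * Y / (3 * X + 3 * Y + D) + 3 * X / (3 * X + 3 * Y + D) * (8 * Y) / (9 * X)).
    move=> q; rewrite /q; split; last (rewrite /normv; apply: sqrt_eq => //; rewrite rr);
    rewrite dotE !mxE a0 a1 a2 b0 b1 b2 c0 c1 c2; field; by rewrite ?SN ?XN ?YN.
  - exists (3 * X / (3 * X + 3 * Y + D) + D / (3 * X + 3 * Y + D) * (9 * X ^+ 2 - 8 * X * Y) / Q).
    move=> q; rewrite /q; split; last (rewrite /normv; apply: sqrt_eq => //; rewrite rr SQ);
    rewrite dotE !mxE a0 a1 a2 b0 b1 b2 c0 c1 c2 /Q; field; rewrite ?SN ?XN ?YN ?andbT; first [exact: QN | done].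
exists (1 - 9*(9*Y-8*X)/(34*Y) - 9*(9*X-8*Y)/(34*X)), (9*(9*X-8*Y)/(34*X)).
have rr : (9 * D / Num.sqrt 17) ^+ 2 = 81 * Q / 17.
  rewrite expr_div_n exprMn DQ s17s; ring.
have r0 : 0 <= 9 * D / Num.sqrt 17 by apply: divr_ge0; lra.
split; rewrite /normv; apply: sqrt_eq => //; rewrite rr dotE !mxE a0 a1 a2 b0 b1 b2 c0 c1 c2 /Q; field; by rewrite ?XN ?YN.
Qed.
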